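(* Let $K$ be a field, $X$ a finite connected poset with $n$ elements, and $m$ a positive integer. Then $$J_m=\mathrm{span}_K\{e_{xy}: l(\lfloor x,y\rfloor)\ge m\}=J(I(X,K))^m.$$ In particular $J_n=J(I(X,K))^n=\{0\}$, and $J_m$ is an (associative) ideal, hence a Lie ideal, of $I(X,K)$.
   Context: $I(X,K)$ is the incidence algebra: functions $f:X\times X\to K$ with $f(x,y)=0$ unless $x\le y$, product $(fg)(x,y)=\sum_{x\le t\le y}f(x,t)g(t,y)$; for $x\le y$, $e_{xy}$ is the function equal to $1$ at $(x,y)$ and $0$ elsewhere. $J(I(X,K))=\{f: f(x,x)=0\ \forall x\}$ is its Jacobson radical. $[f,g]=fg-gf$. $J_1=\mathrm{span}_K\{[f,g]:f,g\in I(X,K)\}$ and $J_m=\mathrm{span}_K\{[f,g]: f\in J_1,\ g\in J_{m-1}\}$ for $m\ge2$. $\lfloor x,y\rfloor=\{z:x\le z\le y\}$ and $l(\lfloor x,y\rfloor)$ is the maximum length of a chain in it (length of a chain = cardinality minus one). Connected means any two elements are joined by a sequence in which consecutive elements are in a covering relation. *)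

(* Defs.v *)
From HB Require Import structures.
From mathcomp Require Import all_boot all_order all_algebra.
Set Implicit Arguments. Unset Strict Implicit. Unset Printing Implicit Defensive.
Import Order.TTheory GRing.Theory.
Local Open Scope ring_scope.
Local Open Scope order_scope.

Section Incidence.
Variables (d : Order.disp_t) (X : finPOrderType d) (K : fieldType).

Local Notation fn := {ffun X * X -> K}.

Definition inI (f : fn) : Prop := forall x y : X, ~~ (x <= y) -> f (x, y) = 0.

Definition imul (f g : fn) : fn :=
  [ffun p : X * X => \sum_(t : X | (p.1 <= t) && (t <= p.2)) f (p.1, t) * g (t, p.2)].

Definition icomm (f g : fn) : fn := imul f g - imul g f.

Definition eunit (x y : X) : fn := [ffun p : X * X => if p == (x, y) then 1 else 0].

Definition inspan (S : fn -> Prop) (v : fn) : Prop :=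
  exists (k : nat) (c : 'I_k -> K) (s : 'I_k -> fn),
    (forall i, S (s i)) /\ forall p : X * X, v p = \sum_(i < k) c i * s i p.

Definition Jrad (f : fn) : Prop := inI f /\ forall x : X, f (x, x) = 0.

Definition J1 : fn -> Prop :=
  inspan (fun h => exists f g, inI f /\ inI g /\ h = icomm f g).

(* J_m (m >= 1); the value at m = 0 is irrelevant *)
Fixpoint Jlie (m : nat) : fn -> Prop :=
  match m with
  | 0 => fun _ => False
  | 1 => J1
  | m'.+1 => inspan (fun h => exists f g, J1 f /\ Jlie m' g /\ h = icomm f g)
  end.

Fixpoint Jpow (m : nat) : fn -> Prop :=
  match m with
  | 0 => fun _ => False
  | 1 => Jrad
  | m'.+1 => inspan (fun h => exists f g, Jrad f /\ Jpow m' g /\ h = imul f g)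
  end.

Definition is_chain (A : {set X}) : bool :=
  [forall a in A, forall b in A, (a <= b) || (b <= a)].

Definition interval_set (x y : X) : {set X} := [set z | (x <= z) && (z <= y)].

Definition ilen (x y : X) : nat :=
  \max_(A : {set X} | is_chain A && (A \subset interval_set x y)) #|A|.-1.

Definition Espan (m : nat) : fn -> Prop :=
  inspan (fun h => exists x y : X, [/\ x <= y, (m <= ilen x y)%N & h = eunit x y]).

Definition covers (x y : X) : bool := (x < y) && [forall z : X, ~~ ((x < z) && (z < y))].

Definition connected_poset : Prop :=
  forall x y : X, exists s : seq X,
    path (fun a b => covers a b || covers b a) x s /\ last x s = y.

End Incidence.

(* Main.v *)
Require Import Defs.
From HB Require Import structures.
From mathcomp Require Import all_boot all_order all_algebra.
From mathcomp Require Import zify.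
Import Order.TTheory GRing.Theory.
Local Open Scope ring_scope.

Section Work.
Variables (d : Order.disp_t) (X : finPOrderType d) (K : fieldType).
Local Notation fn := {ffun X * X -> K}.
Implicit Types (f g h v : fn) (x y z t : X).
Local Notation e := (eunit K).

Definition good (m : nat) (p : X * X) : bool :=
  ((p.1 <= p.2)%O && (m <= ilen p.1 p.2)%N).

Definition supp (m : nat) f : Prop := forall p, ~~ good m p -> f p = 0.

Lemma suppP m f p : supp m f -> f p != 0 -> good m p.
Proof. by move=> H nz; apply/negPn/negP => /H /eqP; rewrite (negbTE nz). Qed.

Lemma span_supp (S : fn -> Prop) m v :
  (forall h, S h -> supp m h) -> inspan S v -> supp m v.
Proof.
move=> H [k [c [s [HS Hv]]]] p bad; rewrite Hv big1 // => i _.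
by rewrite (H _ (HS i) p bad) mulr0.
Qed.

Lemma eunitE x y p : e x y p = if p == (x, y) then 1 else 0.
Proof. by rewrite /eunit ffunE. Qed.

Lemma supp_span (S : fn -> Prop) m v :
  (forall x y, good m (x, y) -> S (e x y)) -> supp m v -> inspan S v.
Proof.
move=> HS Hv.
pose A := [pred p : X * X | good m p].
exists #|A|, (fun i => v (enum_val i)), (fun i => e (enum_val i).1 (enum_val i).2).
split.
  by move=> i; apply: HS; rewrite -surjective_pairing; have := enum_valP i.
move=> p.
rewrite -(big_enum_val (fun q => v q * e q.1 q.2 p)) /=.
have [gp|bp] := boolP (good m p).
  rewrite (bigD1 p) //= eunitE -surjective_pairing eqxx mulr1 big1 ?addr0 //.
  by move=> q /andP[_ nq]; rewrite eunitE -surjective_pairing eq_sym (negbTE nq) mulr0.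
rewrite Hv // big1 // => q qA; rewrite eunitE -surjective_pairing.
case: eqP => [epq|_]; last by rewrite mulr0.
by move: qA; rewrite -epq inE (negbTE bp).
Qed.


Lemma ilen_ge x y (A : {set X}) : is_chain A -> A \subset interval_set x y ->
  (#|A|.-1 <= ilen x y)%N.
Proof.
move=> c s.
exact: (@leq_bigmax_cond _ (fun B : {set X} => is_chain B && (B \subset interval_set x y))
  (fun B : {set X} => #|B|.-1) A (introT andP (conj c s))).
Qed.

Lemma ilen_ex x y : exists A : {set X},
  [/\ is_chain A, A \subset interval_set x y & ilen x y = #|A|.-1].
Proof.
pose P := [pred B : {set X} | is_chain B && (B \subset interval_set x y)].
have H : (0 < #|P|)%N.
  apply/card_gt0P; exists set0; rewrite inE sub0set andbT.
  by apply/forallP => a; rewrite in_set0.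
case: (eq_bigmax_cond (fun B : {set X} => #|B|.-1) H) => B HB E.
move: HB; rewrite inE => /andP[cB sB]; exists B; split => //.
Qed.

Lemma chainP (A : {set X}) : is_chain A ->
  forall a b, a \in A -> b \in A -> (a <= b)%O || (b <= a)%O.
Proof.
move/forallP => H a b aA bA; move: (H a); rewrite aA /= => /forallP /(_ b).
by rewrite bA.
Qed.

Lemma chainI (A : {set X}) :
  (forall a b, a \in A -> b \in A -> (a <= b)%O || (b <= a)%O) -> is_chain A.
Proof.
move=> H; apply/forallP => a; apply/implyP => aA; apply/forallP => b.
by apply/implyP => bA; exact: H.
Qed.

Lemma chainU1 x (A : {set X}) : is_chain A ->
  (forall a, a \in A -> (x <= a)%O || (a <= x)%O) -> is_chain (x |: A).
Proof.
move=> cA H; apply: chainI => a b; rewrite !in_setU1.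
case/orP => [/eqP->|aA]; case/orP => [/eqP->|bA].
- by rewrite lexx.
- exact: H.
- by rewrite orbC; exact: H.
- exact: (chainP _ cA a b aA bA).
Qed.

Lemma chain_sub (A B : {set X}) : A \subset B -> is_chain B -> is_chain A.
Proof.
move=> sAB cB; apply: chainI => a b aA bA.
exact: (chainP _ cB a b (subsetP sAB _ aA) (subsetP sAB _ bA)).
Qed.

Lemma in_int x y z : (z \in interval_set x y) = (x <= z)%O && (z <= y)%O.
Proof. by rewrite inE. Qed.

Lemma L2 x y z : (x < y)%O -> (y <= z)%O -> ((ilen y z).+1 <= ilen x z)%N.
Proof.
move=> xy yz; case: (ilen_ex y z) => A [cA sA ->].
have Ay a : a \in A -> (y <= a)%O && (a <= z)%O.
  by move=> aA; have := subsetP sA a aA; rewrite in_int.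
have cyA : is_chain (y |: A).
  by apply: chainU1 => // a /Ay /andP[-> _].
have cB : is_chain (x |: (y |: A)).
  apply: chainU1 => // a; rewrite in_setU1 => /orP[/eqP->|/Ay/andP[ya _]].
    by rewrite ltW.
  by rewrite (le_trans (ltW xy) ya).
have sB : x |: (y |: A) \subset interval_set x z.
  apply/subsetP => a; rewrite !in_setU1 in_int.
  case/orP => [/eqP->|/orP[/eqP->|/Ay/andP[ya az]]].
  - by rewrite lexx (le_trans (ltW xy) yz).
  - by rewrite ltW.
  - by rewrite az (le_trans (ltW xy) ya).
have xn : x \notin y |: A.
  rewrite in_setU1 negb_or; apply/andP; split.
    by move: xy; rewrite lt_neqAle => /andP[].
  apply/negP => /Ay /andP[yx _].
  by have := lt_le_trans xy yx; rewrite ltxx.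
have := ilen_ge _ _ _ cB sB; rewrite cardsU1 xn.
have h1 : (#|A| <= #|y |: A|)%N by apply: subset_leq_card; apply: subsetUr.
have h2 : (0 < #|y |: A|)%N by apply/card_gt0P; exists y; rewrite setU11.
move=> h3; lia.
Qed.

Lemma L3 x y z : (x <= y)%O -> (y < z)%O -> ((ilen x y).+1 <= ilen x z)%N.
Proof.
move=> xy yz; case: (ilen_ex x y) => A [cA sA ->].
have Ay a : a \in A -> (x <= a)%O && (a <= y)%O.
  by move=> aA; have := subsetP sA a aA; rewrite in_int.
have cyA : is_chain (y |: A).
  by apply: chainU1 => // a /Ay /andP[_ ->]; rewrite orbT.
have cB : is_chain (z |: (y |: A)).
  apply: chainU1 => // a; rewrite in_setU1 => /orP[/eqP->|/Ay/andP[_ ay]].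
    by rewrite (ltW yz) orbT.
  by rewrite (le_trans ay (ltW yz)) orbT.
have sB : z |: (y |: A) \subset interval_set x z.
  apply/subsetP => a; rewrite !in_setU1 in_int.
  case/orP => [/eqP->|/orP[/eqP->|/Ay/andP[xa ay]]].
  - by rewrite lexx (le_trans xy (ltW yz)).
  - by rewrite xy ltW.
  - by rewrite xa (le_trans ay (ltW yz)).
have xn : z \notin y |: A.
  rewrite in_setU1 negb_or; apply/andP; split.
    by move: yz; rewrite lt_neqAle eq_sym => /andP[].
  apply/negP => /Ay /andP[_ zy].
  by have := lt_le_trans yz zy; rewrite ltxx.
have := ilen_ge _ _ _ cB sB; rewrite cardsU1 xn.
have h1 : (#|A| <= #|y |: A|)%N by apply: subset_leq_card; apply: subsetUr.
have h2 : (0 < #|y |: A|)%N by apply/card_gt0P; exists y; rewrite setU11.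
move=> h3; lia.
Qed.

Lemma ilen_xx x : ilen x x = 0%N.
Proof.
apply/eqP; rewrite -leqn0; apply/bigmax_leqP => A /andP[_ sA].
have : (#|A| <= #|[set x]|)%N.
  apply: subset_leq_card; apply/subsetP => a /(subsetP sA); rewrite in_int.
  by move=> h; rewrite in_set1 eq_sym; apply/eqP/le_anti.
by rewrite cards1; case: #|A| => [|[]].
Qed.

Lemma ilen_bound x y : (ilen x y <= #|X|.-1)%N.
Proof.
apply/bigmax_leqP => A _; rewrite -!subn1 leq_sub2r //; exact: max_card.
Qed.

Lemma good1 x y : good 1 (x, y) = (x < y)%O.
Proof.
rewrite /good /=; have [xy|nxy] /= := boolP (x <= y)%O; last first.
  by apply/esym/negbTE; apply: contra nxy; exact: ltW.
case: (eqVneq x y) => [<-|nxy]; first by rewrite ltxx ilen_xx.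
have lt : (x < y)%O by rewrite lt_neqAle nxy xy.
by rewrite lt; have := L3 _ _ _ (lexx x) lt; rewrite ilen_xx.
Qed.


Lemma L_dec m x z : (m.+1 <= ilen x z)%N ->
  exists y, [/\ (x < y)%O, (y <= z)%O & (m <= ilen y z)%N].
Proof.
move=> H; case: (ilen_ex x z) => A [cA sA E]; rewrite E in H.
pose A' := A :\ x.
have cA' : is_chain A' by exact: (chain_sub _ _ (subsetDl A [set x]) cA).
have hc : #|A| = ((x \in A) + #|A'|)%N by rewrite (cardsD1 x A).
have cA'm : (m.+1 <= #|A'|)%N by move: hc H; case: (x \in A) => /= hc H; lia.
have /card_gt0P[y0 y0A] : (0 < #|A'|)%N by lia.
case: (arg_maxnP (fun i => #|[set b in A' | (i <= b)%O]|) y0A) => y yA ymax.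
have ymin a : a \in A' -> (y <= a)%O.
  move=> aA; apply/contraT => nya.
  have ay : (a <= y)%O.
    by have := chainP _ cA' a y aA yA; rewrite (negbTE nya) orbF.
  have pr : [set b in A' | (y <= b)%O] \proper [set b in A' | (a <= b)%O].
    apply/properP; split.
      apply/subsetP => b; rewrite !inE => /andP[-> yb] /=.
      exact: le_trans ay yb.
    exists a; first by rewrite inE aA lexx.
    by rewrite inE aA /=.
  by have := ymax a aA; rewrite /geq /= leqNgt (proper_card pr).
have yA' : y \in A' by []. 
have yA0 : y \in A by move: yA'; rewrite /A' in_setD1 => /andP[].
have yx : y != x by move: yA'; rewrite /A' in_setD1 => /andP[].
have := subsetP sA y yA0; rewrite in_int => /andP[xy yz].
exists y; split => //.
  by rewrite lt_neqAle eq_sym yx.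
have sA' : A' \subset interval_set y z.
  apply/subsetP => a aA; rewrite in_int ymin //=.
  have aA0 : a \in A by move: aA; rewrite in_setD1 => /andP[].
  by have := subsetP sA a aA0; rewrite in_int => /andP[].
have := ilen_ge _ _ _ cA' sA'; lia.
Qed.

Lemma imulE f g p : imul f g p =
  \sum_(t : X | (p.1 <= t)%O && (t <= p.2)%O) f (p.1, t) * g (t, p.2).
Proof. by rewrite /imul ffunE. Qed.

Lemma icommE f g p : icomm f g p = imul f g p - imul g f p.
Proof. by rewrite /icomm !ffunE. Qed.

Lemma zeroE p : (0 : fn) p = 0.
Proof. by rewrite ffunE. Qed.

Lemma supp_sub m f g : supp m f -> supp m g -> supp m (f - g).
Proof. by move=> Hf Hg p bad; rewrite !ffunE Hf // Hg // subr0. Qed.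

Lemma ilen_monoL x t z : (x <= t)%O -> (t <= z)%O -> (ilen t z <= ilen x z)%N.
Proof.
move=> xt tz; case: (eqVneq x t) => [->//|nxt].
have lt : (x < t)%O by rewrite lt_neqAle nxt xt.
by have := L2 _ _ _ lt tz; lia.
Qed.

Lemma ilen_monoR x t z : (x <= t)%O -> (t <= z)%O -> (ilen x t <= ilen x z)%N.
Proof.
move=> xt tz; case: (eqVneq t z) => [->//|ntz].
have lt : (t < z)%O by rewrite lt_neqAle ntz tz.
by have := L3 _ _ _ xt lt; lia.
Qed.

Lemma supp_mul_l m f g : supp 1 f -> supp m g -> supp m.+1 (imul f g).
Proof.
move=> Hf Hg [x z] bad; rewrite imulE big1 // => t /andP[/= xt tz].
have [->|nf] := eqVneq (f (x,t)) 0; first by rewrite mul0r.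
have [->|ng] := eqVneq (g (t,z)) 0; first by rewrite mulr0.
have := suppP _ _ _ Hf nf; rewrite good1 => lxt.
have /andP[/= tz' mg] := suppP _ _ _ Hg ng.
move: bad; rewrite /good /= (le_trans xt tz) /= -ltnNge => h.
have h2 := L2 _ _ _ lxt tz'; exfalso; lia.
Qed.

Lemma supp_mul_r m f g : supp m g -> supp 1 f -> supp m.+1 (imul g f).
Proof.
move=> Hg Hf [x z] bad; rewrite imulE big1 // => t /andP[/= xt tz].
have [->|ng] := eqVneq (g (x,t)) 0; first by rewrite mul0r.
have [->|nf] := eqVneq (f (t,z)) 0; first by rewrite mulr0.
have := suppP _ _ _ Hf nf; rewrite good1 => ltz.
have /andP[/= xt' mg] := suppP _ _ _ Hg ng.
move: bad; rewrite /good /= (le_trans xt tz) /= -ltnNge => h.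
have h2 := L3 _ _ _ xt' ltz; exfalso; lia.
Qed.

Lemma supp_mul_inI_l m f g : supp m g -> supp m (imul f g).
Proof.
move=> Hg [x z] bad; rewrite imulE big1 // => t /andP[/= xt tz].
have [->|ng] := eqVneq (g (t,z)) 0; first by rewrite mulr0.
have /andP[/= tz' mg] := suppP _ _ _ Hg ng.
move: bad; rewrite /good /= (le_trans xt tz) /= -ltnNge => h.
have h2 := ilen_monoL _ _ _ xt tz; exfalso; lia.
Qed.

Lemma supp_mul_inI_r m f g : supp m g -> supp m (imul g f).
Proof.
move=> Hg [x z] bad; rewrite imulE big1 // => t /andP[/= xt tz].
have [->|ng] := eqVneq (g (x,t)) 0; first by rewrite mul0r.
have /andP[/= xt' mg] := suppP _ _ _ Hg ng.
move: bad; rewrite /good /= (le_trans xt tz) /= -ltnNge => h.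
have h2 := ilen_monoR _ _ _ xt tz; exfalso; lia.
Qed.

Lemma comm_supp1 f g : supp 1 (icomm f g).
Proof.
move=> [x z]; rewrite good1 icommE => bad.
case: (eqVneq x z) => [<-|nxz].
  have P1 : (fun t => (x <= t)%O && (t <= x)%O) =1 pred1 x.
    by move=> t /=; rewrite eq_le andbC.
  by rewrite !imulE /= (big_pred1 x P1) (big_pred1 x P1) mulrC subrr.
have nle : ~~ (x <= z)%O by move: bad; rewrite lt_neqAle nxz.
rewrite !imulE !big1 ?subr0 // => t /andP[/= xt tz];
by have := le_trans xt tz; rewrite (negbTE nle).
Qed.

Lemma emul x y z : (x <= y)%O -> (y <= z)%O -> imul (e x y) (e y z) = e x z.
Proof.
move=> xy yz; apply/ffunP => [[a b]]; rewrite imulE eunitE /=.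
case: eqP => [[-> ->]|ne].
  rewrite (bigD1 y) /= ?xy ?yz // !eunitE !eqxx mul1r big1 ?addr0 //.
  by move=> t /andP[_ nt]; rewrite !eunitE xpair_eqE (negbTE nt) andbF mul0r.
apply: big1 => t _; rewrite !eunitE !xpair_eqE.
case: (a =P x) => [ax|_]; last by rewrite mul0r.
case: (b =P z) => [bz|_]; last by rewrite andbF mulr0.
by exfalso; apply: ne; rewrite ax bz.
Qed.

Lemma emul0 (a b c c' : X) : b != c -> imul (e a b) (e c c') = 0.
Proof.
move=> bc; apply/ffunP => p; rewrite imulE zeroE; apply: big1 => t _.
rewrite !eunitE !xpair_eqE.
have [->|tb] := eqVneq t b; first by rewrite (negbTE bc) andFb mulr0.
by rewrite andbF mul0r.
Qed.

Lemma supp_e m x y : good m (x, y) -> supp m (e x y).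
Proof.
move=> g p bad; rewrite eunitE; case: eqP => // ep.
by move: bad; rewrite ep g.
Qed.

Lemma inI_e x y : (x <= y)%O -> inI (e x y).
Proof.
by move=> xy a b nab; rewrite eunitE; case: eqP => // [[ax bx]]; rewrite ax bx xy in nab.
Qed.


Lemma espan_iff m f : Espan m f <-> supp m f.
Proof.
split.
  apply: span_supp => h [x [y [xy mi ->]]]; apply: supp_e.
  by rewrite /good /= xy mi.
move=> H; apply: supp_span H => x y /andP[/= xy mi]; exists x, y; split => //.
Qed.

Lemma J1_iff f : J1 f <-> supp 1 f.
Proof.
split.
  by apply: span_supp => h [f1 [g1 [_ [_ ->]]]]; apply: comm_supp1.
move=> H; apply: supp_span H => x y; rewrite good1 => lt.
exists (e x x), (e x y); split; first exact: inI_e.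
split; first exact: inI_e (ltW lt).
rewrite /icomm emul ?lexx ?(ltW lt) // emul0 ?subr0 //.
by rewrite eq_sym lt_eqF.
Qed.

Lemma Jlie_iff m f : (0 < m)%N -> Jlie m f <-> supp m f.
Proof.
elim: m f => [//|m IH] f _; case: m IH => [|m] IH; first exact: J1_iff.
split.
  apply: span_supp => h [f1 [g1 [Hf [Hg ->]]]].
  have Hf' := (proj1 (J1_iff f1) Hf).
  have Hg' := (proj1 (IH g1 isT) Hg).
  apply: supp_sub; [exact: supp_mul_l | exact: supp_mul_r].
move=> H; apply: supp_span H => x z /andP[/= xz mi].
case: (L_dec _ _ _ mi) => y [xy yz my].
exists (e x y), (e y z); split.
  by apply/J1_iff/supp_e; rewrite good1.
split; first by apply/(IH _ isT)/supp_e; rewrite /good /= yz my.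
rewrite /icomm emul ?(ltW xy) // emul0 ?subr0 //.
by rewrite eq_sym lt_eqF // (lt_le_trans xy yz).
Qed.

Lemma Jrad_iff f : Jrad f <-> supp 1 f.
Proof.
split.
  move=> [HI Hd] [x z]; rewrite good1 lt_neqAle negb_and negbK.
  case/orP => [/eqP->|nle]; [exact: Hd | exact: HI].
move=> H; split.
  by move=> x y nxy; apply: H; rewrite /good /= (negbTE nxy).
by move=> x; apply: H; rewrite good1 ltxx.
Qed.

Lemma Jpow_iff m f : (0 < m)%N -> Jpow m f <-> supp m f.
Proof.
elim: m f => [//|m IH] f _; case: m IH => [|m] IH; first exact: Jrad_iff.
split.
  apply: span_supp => h [f1 [g1 [Hf [Hg ->]]]].
  have Hf' := (proj1 (Jrad_iff f1) Hf).
  have Hg' := (proj1 (IH g1 isT) Hg).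
  exact: supp_mul_l.
move=> H; apply: supp_span H => x z /andP[/= xz mi].
case: (L_dec _ _ _ mi) => y [xy yz my].
exists (e x y), (e y z); split.
  by apply/Jrad_iff/supp_e; rewrite good1.
split; first by apply/(IH _ isT)/supp_e; rewrite /good /= yz my.
by rewrite emul ?(ltW xy).
Qed.

Lemma suppN_iff f : (0 < #|X|)%N -> supp #|X| f <-> f = 0.
Proof.
move=> n0; split; last by move=> -> p _; rewrite zeroE.
move=> H; apply/ffunP => p; rewrite zeroE; apply: H.
rewrite /good negb_and; apply/orP; right; rewrite -ltnNge.
by apply: (leq_ltn_trans (ilen_bound p.1 p.2)); rewrite ltn_predL.
Qed.

End Work.

Theorem proposition2p4 (d : Order.disp_t) (X : finPOrderType d) (K : fieldType) :
  connected_poset X ->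
  (forall m : nat, (0 < m)%N ->
     (forall f : {ffun X * X -> K}, Jlie m f <-> Espan m f) /\
     (forall f : {ffun X * X -> K}, Jpow m f <-> Espan m f)) /\
  ((0 < #|X|)%N ->
     (forall f : {ffun X * X -> K}, Jlie #|X| f <-> f = 0) /\
     (forall f : {ffun X * X -> K}, Jpow #|X| f <-> f = 0)) /\
  (forall m : nat, (0 < m)%N ->
     (forall f g : {ffun X * X -> K}, inI f -> Jlie m g ->
        Jlie m (imul f g) /\ Jlie m (imul g f) /\ Jlie m (icomm f g))).
Proof.
move=> _; split; [|split].
- move=> m m0; split => f.
    apply: iff_trans; [exact: Jlie_iff | apply: iff_sym; exact: espan_iff].
  apply: iff_trans; [exact: Jpow_iff | apply: iff_sym; exact: espan_iff].
- move=> n0; split => f.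
    apply: iff_trans; [exact: Jlie_iff | exact: suppN_iff].
  apply: iff_trans; [exact: Jpow_iff | exact: suppN_iff].
- move=> m m0 f g _ /(Jlie_iff _ _ _ _ g m0) Hg.
  split; first by apply/(Jlie_iff _ _ _ _ _ m0); exact: supp_mul_inI_l.
  split; first by apply/(Jlie_iff _ _ _ _ _ m0); exact: supp_mul_inI_r.
  apply/(Jlie_iff _ _ _ _ _ m0); rewrite /icomm; apply: supp_sub.
    exact: supp_mul_inI_l.
  exact: supp_mul_inI_r.
Qed.
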